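(* Let $G$ be a connected graph and let $x\in V(G)$ be a vertex with $d(x)=\Delta(G)\le |G|-2$. If $V(G)\setminus N[x]$ is an independent set in $G$, then $G$ admits an antimagic orientation.
   Context: All graphs are finite and simple; $|G|$ is the number of vertices, $\Delta(G)$ the maximum degree, $N(v)$ the set of neighbours of $v$, and $N[v]=N(v)\cup\{v\}$. For a digraph $D$ and an injective map $\tau$ from the arc set $A(D)$ to positive integers, $s_{(D,\tau)}(u)$ is the sum of labels of arcs entering $u$ minus the sum of labels of arcs leaving $u$ ($0$ if $u$ is isolated). If $D$ has $m$ arcs, a bijection $\tau:A(D)\to\{1,\dots,m\}$ is an antimagic labeling if the values $s_{(D,\tau)}(u)$ are pairwise distinct over all vertices. $G$ admits an antimagic orientation if some orientation $D$ of $G$ has an antimagic labeling. *)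

(* Defs.v *)
From mathcomp Require Import all_boot all_order all_algebra.
Set Implicit Arguments. Unset Strict Implicit. Unset Printing Implicit Defensive.
Import GRing.Theory Num.Theory.

Definition simple_graph (T : finType) (e : rel T) : Prop :=
  symmetric e /\ irreflexive e.

Definition nbhd (T : finType) (e : rel T) (v : T) : {set T} := [set u | e v u].
Definition deg (T : finType) (e : rel T) (v : T) : nat := #|nbhd e v|.
Definition cnbhd (T : finType) (e : rel T) (v : T) : {set T} := v |: nbhd e v.
Definition maxdeg (T : finType) (e : rel T) : nat := \max_(v : T) deg e v.

Definition connected_graph (T : finType) (e : rel T) : Prop :=
  forall u v : T, connect e u v.

Definition independent (T : finType) (e : rel T) (A : {set T}) : Prop :=
  forall u v, u \in A -> v \in A -> ~~ e u v.

Definition orientation (T : finType) (e : rel T) (o : rel T) : Prop :=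
  (forall u v, o u v -> e u v) /\
  (forall u v, e u v -> (o u v && ~~ o v u) || (o v u && ~~ o u v)).

Definition arcs (T : finType) (o : rel T) : {set T * T} :=
  [set a | o a.1 a.2].

Definition labeling (T : finType) (o : rel T) (tau : T * T -> nat) : Prop :=
  {in arcs o &, injective tau} /\
  (forall a, a \in arcs o -> 1 <= tau a <= #|arcs o|)%N /\
  (forall k, (1 <= k <= #|arcs o|)%N -> exists2 a, a \in arcs o & tau a = k).

Definition vsum (T : finType) (o : rel T) (tau : T * T -> nat) (u : T) : int :=
  ((\sum_(v : T | o v u) tau (v, u))%:Z - (\sum_(v : T | o u v) tau (u, v))%:Z)%R.

Definition antimagic_labeling (T : finType) (o : rel T) (tau : T * T -> nat) : Prop :=
  labeling o tau /\ injective (vsum o tau).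

Definition has_antimagic_orientation (T : finType) (e : rel T) : Prop :=
  exists o : rel T, orientation e o /\ exists tau : T * T -> nat, antimagic_labeling o tau.

(* Main.v *)
Require Import Defs.
From mathcomp Require Import all_boot all_order all_algebra.
From mathcomp Require Import zify.
Set Implicit Arguments. Unset Strict Implicit. Unset Printing Implicit Defensive.
Import GRing.Theory Num.Theory Order.TTheory.

Section Rank.
Variables (X : finType) (S : {set X}) (k : X -> int) (i : X -> nat).
Hypothesis i_inj : injective i.

Definition lexle (z' z : X) := ((k z' < k z)%R || ((k z' == k z) && (i z' <= i z))).
Definition lexlt (z z' : X) := ((k z < k z')%R || ((k z == k z') && (i z < i z'))).
Definition rank (z : X) := #|[set z' in S | lexle z' z]|.

Lemma rank_ge1 z : z \in S -> 0 < rank z.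
Proof.
move=> zS; apply/card_gt0P; exists z; rewrite inE zS /lexle eqxx leqnn.
by rewrite orbT.
Qed.

Lemma rank_le z : rank z <= #|S|.
Proof. by apply: subset_leq_card; apply/subsetP=> y; rewrite inE => /andP[]. Qed.

Lemma lexlt_k z z' : lexlt z z' -> (k z <= k z')%R.
Proof. by case/orP=> [/ltW //|/andP[/eqP -> _]]. Qed.

Lemma rank_lt z z' : z' \in S -> lexlt z z' -> rank z < rank z'.
Proof.
move=> z'S hlt; apply: proper_card; apply/properP; split.
  apply/subsetP=> y; rewrite !inE => /andP[-> hy] /=.
  by move: hy hlt; rewrite /lexle /lexlt; lia.
exists z'; first by rewrite inE z'S /lexle eqxx leqnn orbT.
rewrite inE negb_and z'S /= /lexle; move: hlt; rewrite /lexlt; lia.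
Qed.

Lemma lex_total z z' : z != z' -> lexlt z z' || lexlt z' z.
Proof.
move=> hne; have : i z != i z' by apply: contra hne => /eqP /i_inj ->.
rewrite /lexlt; lia.
Qed.

Lemma rank_inj : {in S &, injective rank}.
Proof.
move=> z z' zS z'S hr; apply/eqP; apply/negP=> /negP hne.
case/orP: (lex_total hne) => /rank_lt; [move/(_ z'S)|move/(_ zS)]; rewrite hr ltnn //.
Qed.

Lemma rank_thr z (kap : int) : (k z < kap)%R -> rank z <= #|[set y in S | (k y < kap)%R]|.
Proof.
move=> hz; apply: subset_leq_card; apply/subsetP=> y; rewrite !inE => /andP[-> /=].
move: hz; rewrite /lexle; lia.
Qed.

Lemma rank_thr2 z (kap : int) : z \in S -> (kap <= k z)%R ->
  #|[set y in S | (k y < kap)%R]| < rank z.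
Proof.
move=> zS hz; apply: proper_card; apply/properP; split.
  apply/subsetP=> y; rewrite !inE => /andP[-> /=] h; move: hz; rewrite /lexle; lia.
exists z; first by rewrite inE zS /lexle eqxx leqnn orbT.
by rewrite inE zS /=; move: hz; lia.
Qed.

End Rank.

Lemma pigeon (X : finType) (A : {set X}) (f : X -> nat) :
  {in A &, injective f} -> (forall z, z \in A -> 0 < f z <= #|A|) ->
  forall n, 0 < n <= #|A| -> exists2 z, z \in A & f z = n.
Proof.
move=> finj frange n hn.
pose g (z : X) : 'I_#|A|.+1 := inord (f z).
have gE z : z \in A -> (g z : nat) = f z.
  by move=> zA; rewrite /g inordK // ltnS; case/andP: (frange z zA).
have ginj : {in A &, injective g}.
  by move=> z1 z2 h1 h2 /(congr1 val); rewrite /= !gE //; apply: finj.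
pose B := [set~ (ord0 : 'I_#|A|.+1)].
have inB (j : 'I_#|A|.+1) : (j \in B) = (0 < j).
  by rewrite !inE -(inj_eq val_inj) /= lt0n.
have cB : #|B| = #|A| by rewrite cardsC1 card_ord.
have sub : g @: A \subset B.
  apply/subsetP=> j /imsetP[z zA ->]; rewrite inB gE //; by case/andP: (frange z zA).
have eqB : g @: A = B.
  by apply/eqP; rewrite eqEcard sub (card_in_imset ginj) cB leqnn.
have : (inord n : 'I_#|A|.+1) \in B.
  by rewrite inB inordK ?ltnS; case/andP: hn.
rewrite -eqB => /imsetP[z zA hz]; exists z => //.
move: (congr1 val hz); rewrite /= gE // inordK // ltnS; by case/andP: hn.
Qed.
Section Walk.
Variable T : finType.
Definition outs (o : rel T) (l : T * T -> nat) v := \sum_(z | o v z) l (v, z).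
Definition ins (o : rel T) (l : T * T -> nat) v := \sum_(z | o z v) l (z, v).
Definition bal o l v : int := ((outs o l v)%:Z - (ins o l v)%:Z)%R.

Definition WP (f : rel T) (c : T) (lo t M : nat) :=
  exists o : rel T, exists l : T * T -> nat, orientation f o /\ {in arcs o &, injective l} /\
   (forall p, p \in arcs o -> lo < l p <= lo + #|arcs o|) /\
   forall v, (bal o l v + (if v == c then t%:Z else 0) <= M%:Z)%R.

Lemma walk_nil f c lo t M : (forall u v, ~~ f u v) -> t <= M -> WP f c lo t M.
Proof.
move=> hf htM; exists (fun _ _ => false), (fun _ => 0); split.
  by split=> // u v; rewrite (negbTE (hf u v)).
split; first by move=> p; rewrite inE.
split; first by move=> p; rewrite inE.
move=> v; rewrite /bal /outs /ins !big_pred0 //; case: ifP => _; lia.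
Qed.

Lemma outs_add (o' : rel T) l' u0 v0 L v : ~~ o' u0 v0 ->
  outs (fun y z => o' y z || ((y == u0) && (z == v0)))
       (fun p => if p == (u0, v0) then L else l' p) v =
  outs o' l' v + (if v == u0 then L else 0).
Proof.
move=> hn; rewrite /outs; case: (eqVneq v u0) => [->|hv].
  rewrite (bigD1 v0) /=; last by rewrite !eqxx orbT.
  rewrite eqxx addnC; congr (_ + _); apply: eq_big => z.
    case: (eqVneq z v0) => [->|hz]; first by rewrite (negbTE hn).
    by rewrite orbF andbT.
  by case/andP=> hz hz'; rewrite /= xpair_eqE (negbTE hz') andbF.
rewrite addn0; apply: eq_big => z; first by rewrite andFb orbF.
by move=> _; rewrite xpair_eqE (negbTE hv).
Qed.

Lemma ins_add (o' : rel T) l' u0 v0 L v : ~~ o' u0 v0 ->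
  ins (fun y z => o' y z || ((y == u0) && (z == v0)))
       (fun p => if p == (u0, v0) then L else l' p) v =
  ins o' l' v + (if v == v0 then L else 0).
Proof.
move=> hn; rewrite /ins; case: (eqVneq v v0) => [->|hv].
  rewrite (bigD1 u0) /=; last by rewrite !eqxx orbT.
  rewrite eqxx addnC; congr (_ + _); apply: eq_big => z.
    case: (eqVneq z u0) => [->|hz]; first by rewrite (negbTE hn).
    by rewrite /= ?eqxx ?andbF ?andFb ?orbF ?andbT.
  by case/andP=> hz hz'; rewrite /= xpair_eqE (negbTE hz').
rewrite addn0; apply: eq_big => z; first by rewrite ?andbF ?orbF.
by move=> _; rewrite xpair_eqE (negbTE hv) andbF.
Qed.

Lemma walk n : forall f : rel T, symmetric f -> irreflexive f -> #|arcs f| <= n ->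
  forall c lo t M, t <= lo.+1 -> t <= M -> lo + #|arcs f| <= M -> WP f c lo t M.
Proof.
elim: n => [|n IH] f symf irrf hn c lo t M h1 h2 h3.
  apply: walk_nil => // u v; apply/negP=> huv.
  have : (u, v) \in arcs f by rewrite inE.
  by move: hn; rewrite leqn0 => /eqP/cards0_eq ->; rewrite inE.
have step : forall c0 w0 t0, f c0 w0 -> t0 <= lo.+1 -> t0 <= M -> WP f c0 lo t0 M.
  move=> c0 w0 t0 hcw ht1 ht2.
  pose f' := fun y z => f y z && ~~ (((y == c0) && (z == w0)) || ((y == w0) && (z == c0))).
  have symf' : symmetric f'.
    move=> y z; rewrite /f' (symf y z); congr (_ && ~~ _).
    by rewrite orbC; congr (_ || _); rewrite andbC.
  have irrf' : irreflexive f' by move=> y; rewrite /f' irrf.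
  have hlt : #|arcs f'| < #|arcs f|.
    apply: proper_card; apply/properP; split.
      by apply/subsetP=> p; rewrite !inE => /andP[].
    by exists (c0, w0); rewrite !inE /f' /= hcw ?eqxx.
  have hcw0 : c0 != w0 by apply: contraTneq hcw => ->; rewrite irrf.
  have [||||o' [l' [hor' [hinj' [hr' hb']]]]] :=
    IH f' symf' irrf' _ w0 lo.+1 lo.+1 M.
  - by rewrite -ltnS (leq_trans hlt hn).
  - by [].
  - have : 0 < #|arcs f| by apply/card_gt0P; exists (c0, w0); rewrite inE.
    lia.
  - lia.
  have no'wc : ~~ o' w0 c0.
    apply/negP=> /(proj1 hor'); rewrite /f' !eqxx /= orbT andbF //.
  pose o := fun y z => o' y z || ((y == w0) && (z == c0)).
  pose l := fun p => if p == (w0, c0) then lo.+1 else l' p.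
  exists o, l.
  have arcsE : arcs o = (w0, c0) |: arcs o'.
    by apply/setP=> p; rewrite !inE /o orbC; case: p => y z /=; rewrite xpair_eqE.
  have ncard : #|arcs o| = #|arcs o'| + 1.
    by rewrite arcsE cardsU1 inE /= (negbTE no'wc) addnC.
  split.
    split.
      move=> y z; rewrite /o => /orP[/(proj1 hor')|/andP[/eqP-> /eqP->]].
        by rewrite /f' => /andP[].
      by rewrite symf.
    move=> y z hyz.
    have [hp|hp] := boolP ((((y == c0) && (z == w0)) || ((y == w0) && (z == c0)))).
      have n1 : ~~ o' c0 w0.
        by apply/negP=> /(proj1 hor'); rewrite /f' !eqxx /= andbF.
      have n2 : (w0 == c0) = false by rewrite eq_sym; apply/negbTE.
      case/orP: hp => /andP[/eqP hy /eqP hz]; rewrite hy hz /o !eqxx /= (negbTE no'wc) (negbTE n1) n2 ?(negbTE hcw0) //.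
    have hf' : f' y z by rewrite /f' hyz hp.
    move: (proj2 hor' y z hf'); rewrite /o.
    have -> : (y == w0) && (z == c0) = false.
      by apply/negbTE; apply: contra hp => ->; rewrite orbT.
    have -> : (z == w0) && (y == c0) = false.
      by apply/negbTE; apply: contra hp; rewrite andbC => ->.
    by rewrite !orbF.
  split.
    move=> p q; rewrite arcsE !in_setU1 /l.
    case: (eqVneq p (w0, c0)) => [->|hp] /=; case: (eqVneq q (w0, c0)) => [->|hq] //=.
    + move=> _ hq' e1; move: (hr' q hq'); lia.
    + move=> hp' _ e1; move: (hr' p hp'); lia.
    + by move=> hp' hq'; apply: hinj'.
  split.
    move=> p; rewrite ncard arcsE !in_setU1 /l; case: (eqVneq p (w0, c0)) => [->|hp] /=.
      lia.
    move/hr'/andP=> [hA hB]; apply/andP; split; first exact: ltnW hA.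
    by apply: (leq_trans hB); rewrite addSn addn1 addnS.
  move=> v; move: (hb' v); rewrite /bal /o /l outs_add // ins_add //.
  case: (eqVneq v w0) => [hvw|hvw]; case: (eqVneq v c0) => [hvc|hvc] //=.
  - by move: hcw0; rewrite -hvw -hvc eqxx.
  - lia.
  - move=> _; move: (hb' c0) ht1; rewrite hvc (negbTE hcw0) /bal; lia.
  - lia.
case: (pickP (f c)) => [w hw|hnc].
  exact: step hw h1 h2.
case: (pickP (fun p : T * T => f p.1 p.2)) => [[u w] /= huw|hnone]; last first.
  by apply: walk_nil => // u v; rewrite (hnone (u, v)).
have [o [l [hor [hinj [hr hb]]]]] := step u w 0 huw (leq0n _) (leq0n _).
exists o, l; do 3!split => //.
move=> v; case: (eqVneq v c) => [->|hvc].
  rewrite /bal /outs /ins !big_pred0.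
  - move: h2; lia.
  - move=> z; apply/negP=> /(proj1 hor); by rewrite symf hnc.
  - move=> z; apply/negP=> /(proj1 hor); by rewrite hnc.
move: (hb v); case: ifP => _; lia.
Qed.

End Walk.

Lemma sum_sub_le (X : finType) (P Q : pred X) (F : X -> nat) :
  (forall y, P y -> Q y) -> \sum_(y | P y) F y <= \sum_(y | Q y) F y.
Proof.
move=> hPQ; rewrite (bigID P Q) /= -[X in X <= _]addn0; apply: leq_add => //.
by rewrite (eq_bigl P) // => y; case hy: (P y); rewrite ?(hPQ y hy) ?andbF.
Qed.

Lemma sum_lb (X : finType) (P : pred X) (F : X -> nat) c :
  (forall y, P y -> c <= F y) -> #|P| * c <= \sum_(y | P y) F y.
Proof. by move=> h; rewrite -sum_nat_const; apply: leq_sum. Qed.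

Lemma sum_ub (X : finType) (P : pred X) (F : X -> nat) c :
  (forall y, P y -> F y <= c) -> \sum_(y | P y) F y <= #|P| * c.
Proof. by move=> h; rewrite -sum_nat_const; apply: leq_sum. Qed.

Section Construction.
Variables (T : finType) (e : rel T) (x : T) (oN : rel T) (lamN : T * T -> nat).
Hypothesis esym : symmetric e.
Hypothesis eirr : irreflexive e.

Definition inR u := (u != x) && ~~ e x u.
Definition fN (y z : T) := e y z && e x y && e x z.

Hypothesis hRnb : forall r, inR r -> exists v, e r v.
Hypothesis hdegx : forall v, deg e v <= deg e x.
Hypothesis hind : forall u w, inR u -> inR w -> ~~ e u w.
Hypothesis horN : orientation fN oN.
Hypothesis hinjN : {in arcs oN &, injective lamN}.
Hypothesis hrN : forall p, p \in arcs oN -> 0 < lamN p <= #|arcs oN|.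
Hypothesis hbN : forall v, (bal oN lamN v <= #|arcs fN|%:Z)%R.

Definition o : rel T := fun u w => if u == x then e x w else if e x u then oN u w else e u w.
Definition a := #|arcs oN|.
Definition setR := [set p : T * T | inR p.1 && e p.1 p.2].
Definition b := #|setR|.
Definition Kv (r : T) : nat := deg e r * #|T| + enum_rank r.
Definition KR (p : T * T) : int := (Kv p.1)%:Z.
Definition iR (p : T * T) : nat := enum_rank p.
Definition rankR := rank setR KR iR.
Definition tau1 (p : T * T) := if e x p.1 then lamN p else a + rankR p.
Definition pN (v : T) : int :=
  ((\sum_(y | o y v && (y != x)) tau1 (y, v))%:Z - (\sum_(y | o v y) tau1 (v, y))%:Z)%R.
Definition Nset := [set v | e x v].
Definition iN (v : T) : nat := enum_rank v.
Definition rankN := rank Nset pN iN.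
Definition tau (p : T * T) := if p.1 == x then a + b + rankN p.2 else tau1 p.

Lemma iR_inj : injective iR.
Proof. by move=> p q /val_inj /enum_rank_inj. Qed.
Lemma iN_inj : injective iN.
Proof. by move=> p q /val_inj /enum_rank_inj. Qed.

Lemma fN_oN y z : oN y z -> [/\ e y z, e x y & e x z].
Proof. by move/(proj1 horN); rewrite /fN => /andP[/andP[]]. Qed.

Lemma ex_neq v : e x v -> v != x.
Proof. by apply: contraTneq => ->; rewrite eirr. Qed.

Lemma o_to_x y : o y x = false.
Proof.
rewrite /o; case: ifP => [_|hy]; first by rewrite eirr.
case: ifP => hxy; last by rewrite esym hxy.
by apply/negP => /fN_oN [_ _]; rewrite eirr.
Qed.

Lemma o_xE w : o x w = e x w.
Proof. by rewrite /o eqxx. Qed.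

Lemma o_NE v w : e x v -> o v w = oN v w.
Proof. by move=> hv; rewrite /o (negbTE (ex_neq hv)) hv. Qed.

Lemma o_RE r w : inR r -> o r w = e r w.
Proof. by case/andP=> h1 h2; rewrite /o (negbTE h1) (negbTE h2). Qed.

Lemma o_to_R y r : inR r -> o y r = false.
Proof.
move=> hr; have hr' := hr; case/andP: hr' => hrx hxr.
rewrite /o; case: ifP => [_|hy]; first exact/negbTE.
case: ifP => hxy.
  by apply/negP => /fN_oN [_ _]; rewrite (negbTE hxr).
apply/negbTE; apply: hind => //; by rewrite /inR hy hxy.
Qed.

Lemma orient : orientation e o.
Proof.
split.
  move=> u w; rewrite /o; case: ifP => [/eqP -> //|hu].
  by case: ifP => // _ /fN_oN [].
move=> u w huw.
case: (eqVneq u x) => [hux|hux].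
  by rewrite hux in huw *; rewrite o_xE o_to_x huw.
case: (eqVneq w x) => [hwx|hwx].
  by rewrite hwx in huw *; rewrite o_xE o_to_x (esym x u) huw orbT.
have [hxu|hxu] := boolP (e x u); have [hxw|hxw] := boolP (e x w).
- rewrite !o_NE //; apply: (proj2 horN); by rewrite /fN huw hxu hxw.
- have hw : inR w by rewrite /inR hwx hxw.
  by rewrite (o_to_R u hw) (o_RE u hw) (esym w u) huw.
- have hu : inR u by rewrite /inR hux hxu.
  by rewrite (o_to_R w hu) (o_RE w hu) huw.
- have hu : inR u by rewrite /inR hux hxu.
  have hw : inR w by rewrite /inR hwx hxw.
  by move: (hind hu hw); rewrite huw.
Qed.

Definition AX := [set p : T * T | (p.1 == x) && e x p.2].

Lemma oN_nx y z : oN y z -> y != x.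
Proof. by case/fN_oN => _ /ex_neq. Qed.

Lemma arcs_oE : arcs o = AX :|: arcs oN :|: setR.
Proof.
apply/setP => [[u w]]; rewrite !inE /= /o.
case: (eqVneq u x) => [->|hux] /=.
  have -> : oN x w = false by apply/negP => /oN_nx; rewrite eqxx.
  by rewrite /inR eqxx andFb !orbF.
case: ifP => hxu; first by rewrite /inR hxu andbF orbF.
have -> : oN u w = false by apply/negP => /fN_oN []; rewrite hxu.
by rewrite /inR hux hxu.
Qed.

Lemma card_AX : #|AX| = #|Nset|.
Proof.
have -> : AX = [set (x, v) | v in Nset].
  apply/setP => [[u w]]; rewrite !inE /=; apply/idP/imsetP.
    by case/andP=> /eqP -> hw; exists w; rewrite // inE.
  by case=> v; rewrite inE => hv [-> ->]; rewrite eqxx hv.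
by apply: card_imset => v w [].
Qed.

Lemma card_arcs_o : #|arcs o| = #|Nset| + a + b.
Proof.
rewrite arcs_oE.
have d1 : AX :&: arcs oN = set0.
  apply/setP=> p; rewrite !inE; apply/negP => /andP[/andP[/eqP h _] /oN_nx].
  by rewrite h eqxx.
have d2 : (AX :|: arcs oN) :&: setR = set0.
  apply/setP=> p; rewrite !inE /inR; apply/negP => /andP[/orP[/andP[/eqP -> _]|/fN_oN [_ hx _]]].
    by rewrite eqxx.
  by rewrite hx andbF.
have := cardsUI (AX :|: arcs oN) setR; rewrite d2 cards0 addn0 => ->.
by have := cardsUI AX (arcs oN); rewrite d1 cards0 addn0 => ->; rewrite card_AX.
Qed.

Lemma tau_AX p : p \in AX -> a + b < tau p <= a + b + #|Nset|.
Proof.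
rewrite inE => /andP[/eqP h1 h2]; rewrite /tau h1 eqxx.
have hN : p.2 \in Nset by rewrite inE.
have := rank_ge1 pN iN hN; have := rank_le Nset pN iN p.2; rewrite /rankN; lia.
Qed.

Lemma tau_N p : p \in arcs oN -> 0 < tau p <= a.
Proof.
move=> hp; move: (hp); rewrite inE => /fN_oN [_ hx _].
by rewrite /tau (negbTE (ex_neq hx)) /tau1 hx; apply: hrN.
Qed.

Lemma tau_R p : p \in setR -> a < tau p <= a + b.
Proof.
move=> hp; move: (hp); rewrite inE => /andP[/andP[h1 h2] _].
rewrite /tau (negbTE h1) /tau1 (negbTE h2).
have := rank_ge1 KR iR hp; have := rank_le setR KR iR p; rewrite /rankR /b; lia.
Qed.

Lemma tau_inj : {in arcs o &, injective tau}.
Proof.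
move=> p q; rewrite arcs_oE !in_setU => /orP[/orP[hp|hp]|hp] /orP[/orP[hq|hq]|hq] hpq;
  try (move: (tau_AX hp) (tau_N hp) (tau_R hp) (tau_AX hq) (tau_N hq) (tau_R hq));
  try (by move: (tau_AX hp) (tau_N hq); rewrite hpq; lia);
  try (by move: (tau_AX hp) (tau_R hq); rewrite hpq; lia);
  try (by move: (tau_N hp) (tau_AX hq); rewrite hpq; lia);
  try (by move: (tau_N hp) (tau_R hq); rewrite hpq; lia);
  try (by move: (tau_R hp) (tau_AX hq); rewrite hpq; lia);
  try (by move: (tau_R hp) (tau_N hq); rewrite hpq; lia).
- move: hp hq hpq; rewrite !inE /tau => /andP[/eqP h1 h2] /andP[/eqP h3 h4].
  rewrite h1 h3 eqxx => /addnI hr.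
  have e2 : p.2 = q.2 by apply: (rank_inj iN_inj _ _ hr); rewrite inE.
  by case: p q h1 h3 e2 {hr h2 h4} => [? ?] [? ?] /= -> -> ->.
- move: hpq; move: (hp) (hq); rewrite !inE => /fN_oN [_ hx1 _] /fN_oN [_ hx2 _].
  rewrite /tau (negbTE (ex_neq hx1)) (negbTE (ex_neq hx2)) /tau1 hx1 hx2.
  exact: hinjN.
- move: hpq; move: (hp) (hq); rewrite !inE => /andP[/andP[h1 h2] _] /andP[/andP[h3 h4] _].
  rewrite /tau (negbTE h1) (negbTE h3) /tau1 (negbTE h2) (negbTE h4) => /addnI.
  exact: (rank_inj iR_inj).
Qed.

Lemma tau_labeling : labeling o tau.
Proof.
have hr : forall p, p \in arcs o -> 0 < tau p <= #|arcs o|.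
  move=> p; rewrite card_arcs_o arcs_oE !in_setU => /orP[/orP[hp|hp]|hp].
  - by move: (tau_AX hp); lia.
  - by move: (tau_N hp); lia.
  - by move: (tau_R hp); lia.
split; first exact: tau_inj.
split; first exact: hr.
move=> k hk; have [p hp hpk] := pigeon tau_inj hr hk.
by exists p.
Qed.

Lemma vsum_x : vsum o tau x = (- (\sum_(v | e x v) (a + b + rankN v))%:Z)%R.
Proof.
rewrite /vsum big_pred0 => [|y]; last exact: o_to_x.
rewrite GRing.sub0r; congr (- (_ %:Z))%R; apply: eq_big => v; first exact: o_xE.
by move=> _; rewrite /tau /= eqxx.
Qed.

Lemma vsum_R r : inR r -> vsum o tau r = (- (\sum_(v | e r v) (a + rankR (r, v)))%:Z)%R.
Proof.
move=> hr; rewrite /vsum big_pred0 => [|y]; last exact: o_to_R.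
rewrite GRing.sub0r; congr (- (_ %:Z))%R; apply: eq_big => v; first exact: o_RE.
by move=> _; case/andP: hr => h1 h2; rewrite /tau /= (negbTE h1) /tau1 /= (negbTE h2).
Qed.

Lemma vsum_N v : e x v -> vsum o tau v = (pN v + (a + b + rankN v)%:Z)%R.
Proof.
move=> hv; rewrite /vsum /pN (bigD1 x) /=; last by rewrite o_xE.
rewrite /tau /= eqxx (negbTE (ex_neq hv)).
have -> : \sum_(i | o i v && (i != x)) (if i == x then a + b + rankN v else tau1 (i, v)) =
          \sum_(i | o i v && (i != x)) tau1 (i, v).
  by apply: eq_bigr => i /andP[_ /negbTE ->].
rewrite PoszD; lia.
Qed.

Lemma card_fN : #|arcs fN| <= 2 * a.
Proof.
have sub : arcs fN \subset arcs oN :|: [set (p.2, p.1) | p in arcs oN].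
  apply/subsetP => [[u w]]; rewrite inE /= => huw.
  case/orP: (proj2 horN u w huw) => /andP[h _]; rewrite in_setU; apply/orP.
    by left; rewrite inE.
  by right; apply/imsetP; exists (w, u); rewrite ?inE.
apply: (leq_trans (subset_leq_card sub)).
apply: (leq_trans (leq_card_setU _ _).1).
by rewrite /a mul2n -addnn leq_add2l leq_imset_card.
Qed.

Lemma pN_lb v : e x v -> (- (2 * a)%:Z <= pN v)%R.
Proof.
move=> hv.
have hout : \sum_(y | o v y) tau1 (v, y) = outs oN lamN v.
  rewrite /outs; apply: eq_big => y; first exact: o_NE.
  by move=> _; rewrite /tau1 /= hv.
have hin : ins oN lamN v <= \sum_(y | o y v && (y != x)) tau1 (y, v).
  rewrite /ins (eq_bigr (fun y => tau1 (y, v))); last first.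
    by move=> y /fN_oN [_ hy _]; rewrite /tau1 /= hy.
  apply: sum_sub_le => y hy; move: (hy) => /fN_oN [_ hxy _].
  by rewrite o_NE // hy (ex_neq hxy).
move: (hbN v) card_fN; rewrite /pN hout /bal; lia.
Qed.

Lemma SX_lb : #|Nset| * (a + b + 1) <= \sum_(v | e x v) (a + b + rankN v).
Proof.
have -> : #|Nset| = #|[pred v | e x v]| by rewrite /Nset cardsE.
apply: sum_lb => v hv; have := rank_ge1 pN iN (_ : v \in Nset); rewrite inE => /(_ hv).
rewrite /rankN; lia.
Qed.

Lemma SR_ub r : \sum_(v | e r v) (a + rankR (r, v)) <= deg e r * (a + b).
Proof.
have -> : deg e r = #|[pred v | e r v]| by rewrite /deg /nbhd cardsE.
apply: sum_ub => v hv; have := rank_le setR KR iR (r, v); rewrite /rankR /b; lia.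
Qed.

Lemma SR_lb r : inR r -> a + 1 <= \sum_(v | e r v) (a + rankR (r, v)).
Proof.
move=> hr; have [v hv] := hRnb hr.
rewrite (bigD1 v) //=.
have : (r, v) \in setR by rewrite inE /= hr hv.
move/(rank_ge1 KR iR) => h; rewrite -addnA leq_add2l; exact: (leq_trans h (leq_addr _ _)).
Qed.

Lemma deg_pos r : inR r -> 0 < deg e r.
Proof.
move=> hr; have [v hv] := hRnb hr; apply/card_gt0P; exists v; by rewrite inE.
Qed.

Lemma Kv_inj : injective Kv.
Proof.
move=> r r'; rewrite /Kv => h.
have h1 : (enum_rank r : nat) < #|T| by exact: ltn_ord.
have h2 : (enum_rank r' : nat) < #|T| by exact: ltn_ord.
have hA : deg e r = deg e r' by nia.
have : (enum_rank r : nat) = enum_rank r' by rewrite hA in h; lia.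
by move/val_inj/enum_rank_inj.
Qed.

Lemma SR_lt r r' : inR r -> inR r' -> Kv r < Kv r' ->
  \sum_(v | e r v) (a + rankR (r, v)) < \sum_(v | e r' v) (a + rankR (r', v)).
Proof.
move=> hr hr' hK.
pose c0 := #|[set y in setR | (KR y < (Kv r')%:Z)%R]|.
have h1 : \sum_(v | e r v) (a + rankR (r, v)) <= deg e r * (a + c0).
  have -> : deg e r = #|[pred v | e r v]| by rewrite /deg /nbhd cardsE.
  apply: sum_ub => v hv; rewrite leq_add2l; apply: rank_thr.
  by rewrite /KR /= ltz_nat.
have h2 : deg e r' * (a + c0 + 1) <= \sum_(v | e r' v) (a + rankR (r', v)).
  have -> : deg e r' = #|[pred v | e r' v]| by rewrite /deg /nbhd cardsE.
  apply: sum_lb => v hv; rewrite -addnA leq_add2l addn1; apply: rank_thr2.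
    by rewrite inE /= hr'; exact: hv.
  by rewrite /KR /=.
have hd : deg e r <= deg e r'.
  have g1 : (enum_rank r : nat) < #|T| by exact: ltn_ord.
  have g2 : (enum_rank r' : nat) < #|T| by exact: ltn_ord.
  move: hK; rewrite /Kv; nia.
have := deg_pos hr; nia.
Qed.

Lemma vsum_inj : injective (vsum o tau).
Proof.
have cls : forall u, [\/ u = x, e x u | inR u].
  move=> u; case: (eqVneq u x) => [->|hux]; first by constructor 1.
  by case hxu: (e x u); [constructor 2|constructor 3; rewrite /inR hux hxu].
have D1R : forall r, inR r -> 0 < #|Nset|.
  move=> r hr; have := deg_pos hr; have := hdegx r; rewrite /deg /nbhd /Nset; lia.
have D1N : forall v, e x v -> 0 < #|Nset|.
  by move=> v hv; apply/card_gt0P; exists v; rewrite inE.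
have vx := vsum_x; have sx := SX_lb.
have xR : forall r, inR r -> (vsum o tau x < vsum o tau r)%R.
  move=> r hr; rewrite vx vsum_R //.
  have := SR_ub r; have := D1R r hr.
  have f1 : deg e r * (a + b) <= #|Nset| * (a + b) by rewrite leq_mul2r hdegx orbT.
  have f2 : #|Nset| * (a + b + 1) = #|Nset| * (a + b) + #|Nset| by rewrite mulnDr muln1.
  move=> h1 h2; rewrite ltrN2 ltz_nat.
  apply: (leq_trans _ sx); apply: (leq_ltn_trans h2); lia.
have xN : forall v, e x v -> (vsum o tau x < vsum o tau v)%R.
  move=> v hv; rewrite vx vsum_N //; have := pN_lb hv; have := D1N v hv.
  have f2 : #|Nset| * (a + b + 1) = #|Nset| * (a + b) + #|Nset| by rewrite mulnDr muln1.
  have f3 : a + b <= #|Nset| * (a + b) by apply: leq_pmull; exact: D1N v hv.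
  move: sx; lia.
have RN : forall r v, inR r -> e x v -> (vsum o tau r < vsum o tau v)%R.
  move=> r v hr hv; rewrite vsum_R // vsum_N //; have := pN_lb hv; have := SR_lb hr.
  lia.
have RR : forall r r', inR r -> inR r' -> r != r' -> vsum o tau r != vsum o tau r'.
  move=> r r' hr hr' hne; rewrite !vsum_R //.
  have : Kv r != Kv r' by apply: contra hne => /eqP /Kv_inj ->.
  case: (ltngtP (Kv r) (Kv r')) => // hK _.
    by have := SR_lt hr hr' hK; lia.
  by have := SR_lt hr' hr hK; lia.
have NN : forall v w, e x v -> e x w -> lexlt pN iN v w -> (vsum o tau v < vsum o tau w)%R.
  move=> v w hv hw hlt; rewrite !vsum_N //.
  have hw' : w \in Nset by rewrite inE.
  have := rank_lt hw' hlt.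
  have := lexlt_k hlt; rewrite /rankN; lia.
move=> u w huw; apply/eqP; apply/negP => /negP hne; move: huw.
case: (cls u) => [hu|hu|hu]; case: (cls w) => [hw|hw|hw].
- by move: hne; rewrite hu hw eqxx.
- by rewrite hu; move: (xN w hw); lia.
- by rewrite hu; move: (xR w hw); lia.
- by rewrite hw; move: (xN u hu); lia.
- by case/orP: (@lex_total _ pN iN iN_inj _ _ hne) => [/(NN _ _ hu hw)|/(NN _ _ hw hu)]; lia.
- by move: (RN w u hw hu); lia.
- by rewrite hw; move: (xR u hu); lia.
- by move: (RN u w hu hw); lia.
- by move/eqP; apply/negP; apply: RR.
Qed.

Lemma construction : has_antimagic_orientation e.
Proof.
exists o; split; first exact: orient.
exists tau; split; [exact: tau_labeling | exact: vsum_inj].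
Qed.

End Construction.

Unset Implicit Arguments.

Theorem lemma2p2 (T : finType) (e : rel T) (x : T) :
  simple_graph e ->
  connected_graph e ->
  deg e x = maxdeg e ->
  (maxdeg e + 2 <= #|T|)%N ->
  independent e (~: cnbhd e x) ->
  has_antimagic_orientation e.
Proof.
move=> [esym eirr] hconn hdeg _ hind.
have symf : symmetric (fN e x).
  move=> y z; rewrite /fN (esym y z); by case: (e z y); case: (e x y); case: (e x z).
have irrf : irreflexive (fN e x) by move=> y; rewrite /fN eirr.
have [oN [lamN [hor [hinj [hr hb]]]]] :=
  @walk T #|arcs (fN e x)| (fN e x) symf irrf (leqnn _) x 0 0 #|arcs (fN e x)|
    (leq0n _) (leq0n _) (leqnn _).
have hRnb : forall r, inR e x r -> exists v, e r v.
  move=> r /andP[hrx _]; case/connectP: (hconn r x) => [[|v p]] /=.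
    by move=> _ hxr; move: hrx; rewrite hxr eqxx.
  by case/andP=> hv _ _; exists v.
have hdegx : forall v, deg e v <= deg e x.
  by move=> v; rewrite hdeg /maxdeg; apply: (@leq_bigmax_cond _ xpredT (fun v => deg e v) v).
have hind' : forall u w, inR e x u -> inR e x w -> ~~ e u w.
  move=> u w hu hw; apply: hind.
    by move: hu; rewrite /inR /cnbhd !inE negb_or.
  by move: hw; rewrite /inR /cnbhd !inE negb_or.
apply: (@construction T e x oN lamN esym eirr hRnb hdegx hind' hor hinj).
  by move=> p /hr; rewrite add0n.
by move=> v; move: (hb v); case: ifP => _; rewrite GRing.addr0.
Qed.
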